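(* Let $k,N\in\mathbb{N}$ and let $a_1,a_2,\dots$ be complex numbers; set $a_0:=1$. Define $a_{n,j}:=a_j$ if $n\le N$ and $a_{n,j}:=0$ otherwise ($n,j\ge 1$). Then $$\hat{B}_{k+N,N}(a_0,a_1,\dots,a_k)=\sum_{L\vdash k}\frac{1}{C_{stb}(L)}\sum_{\sigma\in S_{\ell(L)}}\operatorname{sign}(\sigma)\,\mathbb{A}_{\sigma,L}\big(\{a_{n,j}\}_{n,j\ge1}\big).$$
   Context: The ordinary Bell polynomial is $\hat{B}_{n,k}(x_1,\dots,x_{n-k+1}):=\sum\frac{k!}{j_1!\cdots j_{n-k+1}!}x_1^{j_1}\cdots x_{n-k+1}^{j_{n-k+1}}$, summed over integers $j_i\ge0$ with $\sum_i j_i=k$ and $\sum_i i\,j_i=n$; equivalently $\big(\sum_{j\ge1}x_jt^j\big)^k=\sum_{n\ge k}\hat{B}_{n,k}(x_1,\dots,x_{n-k+1})t^n$ (here the arguments are $x_1=a_0,x_2=a_1,\dots$). $L\vdash k$ means $L=[x_1,\dots,x_m]$ is a partition of $k$ (multiset of positive integers summing to $k$), $\ell(L)=m$, and $C_{stb}(L):=\prod_x(\#\{i:x_i=x\})!$ over distinct values $x$ in $L$. Writing $L=[k_1,\dots,k_m]$ with $k_1\le\cdots\le k_m$ and, for $\sigma\in S_m$, decomposing $\sigma$ into disjoint cycles $C_1,\dots,C_r$ (fixed points kept as length-one cycles), $\mathbb{A}_{\sigma,L}(\{a_{n,j}\}):=\prod_{t=1}^{r}\big(\sum_{n=1}^{\infty}\prod_{i\in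 C_t}a_{n,k_i}\big)$ (finite sums here). *)

(* Defs.v *)
From mathcomp Require Import all_boot all_order all_algebra all_fingroup.
From mathcomp Require Import Rstruct complex.
Set Implicit Arguments. Unset Strict Implicit. Unset Printing Implicit Defensive.
Import Order.TTheory GRing.Theory Num.Theory.
Local Open Scope ring_scope.

Definition Cplx : numClosedFieldType := (Rdefinitions.R)[i].

(* Ordinary Bell polynomial \hat B_{n,k}(x_1,...,x_{n-k+1}); the argument
   x_{i+1} is [x i] (i.e. [x] is 0-indexed).  The exponent vector
   (j_1,...,j_{n-k+1}) is [j], with j_{i+1} = j i; each j_i <= k. *)
Definition obell (R : fieldType) (n k : nat) (x : nat -> R) : R :=
  \sum_(j : {ffun 'I_(n - k + 1) -> 'I_k.+1} |
          ((\sum_(i < n - k + 1) (j i : nat))%N == k) && ((\sum_(i < n - k + 1) (i.+1 * j i))%N == n))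
     (k`!)%:R / (\prod_(i < n - k + 1) (j i)`!)%N%:R * \prod_(i < n - k + 1) x i ^+ j i.

Definition is_partition (k : nat) (L : seq nat) : bool :=
  [&& sorted leq L, all (fun x => 0 < x)%N L & sumn L == k].

Definition Cstb (L : seq nat) : nat :=
  (\prod_(x <- undup L) (count_mem x L)`!)%N.

(* A_{sigma,L}({a_{n,j}}) = prod over cycles C of sigma (fixed points
   included, porbits) of sum_{n>=1} prod_{i in C} a_{n, k_i},
   where the sum over n is truncated to 1 <= n <= M (all further terms
   vanish in our application, where a_{n,j}=0 for n > M). *)
Definition AsigL (R : comRingType) (m : nat) (s : 'S_m) (kk : 'I_m -> nat)
    (anj : nat -> nat -> R) (M : nat) : R :=
  \prod_(C in porbits s) \sum_(1 <= n < M.+1) \prod_(i in C) anj n (kk i).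

(* Main.v *)
Require Import Defs.
From mathcomp Require Import all_boot all_order all_algebra all_fingroup.
From mathcomp Require Import Rstruct complex.
Import GRing.Theory Num.Theory.
From mathcomp.algebra_tactics Require Import ring.
Set Implicit Arguments. Unset Strict Implicit. Unset Printing Implicit Defensive.
Local Open Scope ring_scope.

Lemma sum_ind K x (F : nat -> nat) : (x < K.+1)%N ->
  (\sum_(i < K.+1) (x == i) * F i)%N = F x.
Proof.
move=> hx; rewrite (bigD1 (Ordinal hx)) //= eqxx mul1n big1 ?addn0 // => i ne.
suff -> : (x == i) = false by [].
apply/negbTE; apply: contra ne => /eqP E; apply/eqP/val_inj; by rewrite /= E.
Qed.

Lemma prod_ind K x (F : nat -> Cplx) : (x < K.+1)%N ->
  \prod_(i < K.+1) F i ^+ (x == i) = F x.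
Proof.
move=> hx; rewrite (bigD1 (Ordinal hx)) //= eqxx expr1 big1 ?mulr1 // => i ne.
suff -> : (x == i) = false by rewrite expr0.
apply/negbTE; apply: contra ne => /eqP E; apply/eqP/val_inj; by rewrite /= E.
Qed.

Lemma cnt_size K s : all (fun x => x < K.+1)%N s ->
  size s = (\sum_(i < K.+1) count_mem (val i) s)%N.
Proof.
elim: s => [|x s IH] /=; first by rewrite big1.
move=> /andP [hx hs]; rewrite big_split /= -IH //.
have E : (\sum_(i < K.+1) (x == i : nat))%N = 1%N.
  by rewrite -(sum_ind (fun _ => 1%N) hx); apply: eq_bigr => i _; rewrite muln1.
by rewrite E add1n.
Qed.

Lemma cnt_sumn K s : all (fun x => x < K.+1)%N s ->
  sumn s = (\sum_(i < K.+1) i * count_mem (val i) s)%N.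
Proof.
elim: s => [|x s IH] /=; first by rewrite big1 // => i; rewrite muln0.
move=> /andP [hx hs].
under eq_bigr do rewrite mulnDr.
rewrite big_split /= -IH //.
congr (_ + _)%N.
under eq_bigr do rewrite mulnC.
rewrite (sum_ind (fun i => i)) //.
Qed.

Lemma prod_cnt K s (F : nat -> Cplx) : all (fun x => x < K.+1)%N s ->
  \prod_(x <- s) F x = \prod_(i < K.+1) F i ^+ count_mem (val i) s.
Proof.
elim: s => [|x s IH] /=; first by rewrite big_nil big1 // => i _; rewrite expr0.
move=> /andP [hx hs]; rewrite big_cons IH //.
under [RHS]eq_bigr do rewrite exprD.
by rewrite big_split /= prod_ind.
Qed.

Lemma Cstb_cnt K s : all (fun x => x < K.+1)%N s ->
  Cstb s = (\prod_(i < K.+1) (count_mem (val i) s)`!)%N.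
Proof.
move=> hs; rewrite /Cstb.
rewrite -(big_mkord xpredT (fun i => (count_mem i s)`!)) /index_iota subn0.
symmetry.
rewrite (bigID (mem s)) /=.
rewrite [X in (_ * X)%N]big1 ?muln1; last first.
  by move=> i /count_memPn ->.
rewrite -big_filter; apply: perm_big; apply: uniq_perm.
- apply: filter_uniq; exact: (iota_uniq 0 K.+1).
- exact: undup_uniq.
move=> x; rewrite mem_undup mem_filter (_ : 0 :: iota 1 K = iota 0 K.+1) // mem_iota /=.
by case xs: (x \in s) => //=; rewrite (allP hs x xs).
Qed.

Lemma size_le_sumn s : all (fun x => 0 < x)%N s -> (size s <= sumn s)%N.
Proof.
elim: s => [|x s IH] //= /andP [hx hs].
exact: (leq_add hx (IH hs)).
Qed.
Lemma inv_iter m n (s : 'S_m) (g : {ffun 'I_m -> 'I_n}) :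
  [forall x, g (s x) == g x] -> forall i x, g ((s ^+ i)%g x) = g x.
Proof.
move=> /forallP H i x; elim: i => [|i IH]; first by rewrite expg0 perm1.
by rewrite expgSr permM (eqP (H _)).
Qed.

Lemma inv_porbit m n (s : 'S_m) (g : {ffun 'I_m -> 'I_n}) x y :
  [forall x, g (s x) == g x] -> y \in porbit s x -> g y = g x.
Proof. by move=> H /porbitP [i ->]; apply: inv_iter. Qed.

Definition invset m n (s : 'S_m) :=
  [set g : {ffun 'I_m -> 'I_n} | [forall x, g (s x) == g x]].

Lemma card_invsetS m n (s : 'S_m) : #|invset n.+1 s| = (n.+1 ^ #|porbits s|)%N.
Proof.
pose Phi (f : {ffun {set 'I_m} -> 'I_n.+1}) : {ffun 'I_m -> 'I_n.+1} :=
  [ffun x => f (porbit s x)].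
pose B := pffun_on (ord0 : 'I_n.+1) (mem (porbits s)) predT.
have Pin x : porbit s x \in porbits s by apply: imset_f.
have -> : invset n.+1 s = Phi @: B.
  apply/setP => g; rewrite inE; apply/idP/imsetP.
  - move=> Hg.
    pose Psi := [ffun C : {set 'I_m} => if C \in porbits s then
       (if [pick x in C] is Some x then g x else ord0) else ord0].
    exists Psi.
      apply/pffun_onP; split; last by move=> ? _.
      by apply/subsetP => C; rewrite inE ffunE; case: (C \in porbits s).
    rewrite /Phi; apply/ffunP => x; rewrite !ffunE Pin.
    case: pickP => [y Hy | H0]; first by rewrite (inv_porbit Hg Hy).
    by move: (H0 x); rewrite porbit_id.
  - move=> [f _ ->]; apply/forallP => x; rewrite !ffunE.
    by have := porbit_perm s 1 x; rewrite expg1 => ->.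
rewrite card_in_imset.
  by rewrite card_pffun_on card_ord.
move=> f1 f2 /pffun_onP [S1 _] /pffun_onP [S2 _] E; apply/ffunP => C.
case: (boolP (C \in porbits s)) => [/imsetP [x _ ->] | nC].
  by move/ffunP: E => /(_ x); rewrite !ffunE.
have h1 : f1 C = ord0.
  by apply/eqP; apply: contraR nC => H; apply: (subsetP S1); rewrite inE.
have h2 : f2 C = ord0.
  by apply/eqP; apply: contraR nC => H; apply: (subsetP S2); rewrite inE.
by rewrite h1 h2.
Qed.

Lemma card_invset m n (s : 'S_m) : #|invset n s| = (n ^ #|porbits s|)%N.
Proof.
case: n => [|n]; last exact: card_invsetS.
case: m s => [|m] s.
  have -> : #|porbits s| = 0%N.
    by apply/eqP; rewrite -leqn0 (leq_trans (leq_imset_card _ _)) // card_ord.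
  rewrite expn0; apply/eqP; rewrite eqn_leq; apply/andP; split.
    by rewrite (leq_trans (max_card _)) // card_ffun !card_ord.
  rewrite card_gt0; apply/set0Pn; exists [ffun x => x]; rewrite inE.
  by apply/forallP => -[].
have -> : invset 0 s = set0.
  by apply/setP => g; case: (g ord0).
rewrite cards0 exp0n // card_gt0; apply/set0Pn; exists (porbit s ord0).
by apply: imset_f.
Qed.

Lemma sign_stab m n (g : {ffun 'I_m -> 'I_n}) :
  \sum_(s : 'S_m | [forall x, g (s x) == g x]) ((-1) ^+ odd_perm s : Cplx)
   = (injectiveb g)%:R.
Proof.
case: (boolP (injectiveb g)) => [/injectiveP Hi | /injectivePn [x [y nxy Exy]]].
  rewrite (big_pred1 1%g) ?odd_perm1 //.
  move=> s /=; apply/forallP/eqP => [H | ->].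
    apply/permP => z; rewrite perm1; apply: Hi; exact/eqP/H.
  by move=> z; rewrite perm1.
set S := \sum_(s | _) _.
pose t := tperm x y.
have gt z : g (t z) = g z by rewrite /t; case: tpermP => [->|->|].
have : S = - S.
  rewrite {1}/S (reindex_inj (mulIg t)) /= -sumrN; apply: eq_big => s.
    by apply: eq_forallb => z; rewrite permM gt.
  by move=> _; rewrite odd_permM odd_tperm nxy signr_addb expr1 mulrN1.
move/eqP; rewrite -subr_eq0 opprK -mulr2n mulrn_eq0 /=.
by move/eqP.
Qed.

Lemma sign_sum m N :
  \sum_(s : 'S_m) (-1) ^+ odd_perm s * (N%:R : Cplx) ^+ #|porbits s| = (N ^_ m)%:R.
Proof.
transitivity (\sum_(s : 'S_m) \sum_(g : {ffun 'I_m -> 'I_N} | [forall x, g (s x) == g x])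
   ((-1) ^+ odd_perm s : Cplx)).
  apply: eq_bigr => s _; rewrite -natrX -card_invset mulr_natr -sumr_const.
  by apply: eq_bigl => g; rewrite inE.
rewrite (exchange_big_dep xpredT) //=.
transitivity (\sum_(g : {ffun 'I_m -> 'I_N}) ((injectiveb g)%:R : Cplx)).
  by apply: eq_bigr => g _; rewrite sign_stab.
rewrite -[in RHS](card_ord N) -[in RHS](card_ord m) -card_inj_ffuns -sum1_card natr_sum.
rewrite [RHS]big_mkcond; apply: eq_bigr => g _; rewrite inE; by case: injectiveb.
Qed.

Lemma AsigL_simpl m (s : 'S_m) kk (a : nat -> Cplx) N :
  AsigL s kk (fun n j => if (n <= N)%N then a j else 0) N
  = (N%:R) ^+ #|porbits s| * \prod_(i < m) a (kk i).
Proof.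
rewrite /AsigL.
transitivity (\prod_(C in porbits s) (N%:R * \prod_(i in C) a (kk i))).
  apply: eq_bigr => C _.
  rewrite (eq_big_nat _ _ (F2 := fun _ => \prod_(i in C) a (kk i))); last first.
    by move=> n /andP [_ Hn]; apply: eq_bigr => i _; rewrite -ltnS Hn.
  by rewrite sumr_const_nat subn1 /= mulr_natl.
rewrite big_split prodr_const /=; congr (_ * _).
symmetry.
rewrite (partition_big (porbit s) (mem (porbits s))) /=; last first.
  by move=> i _; apply: imset_f.
apply: eq_bigr => C /imsetP [x _ ->]; apply: eq_bigl => i.
by rewrite eq_porbit_mem.
Qed.

Section Comb.
Variables K N : nat.

Definition ST := {m : 'I_K.+1 & m.-tuple 'I_K.+1}.
Definition enc (p : ST) : seq nat := map val (tagged p).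

Lemma size_enc p : size (enc p) = tag p.
Proof. by rewrite size_map size_tuple. Qed.

Lemma enc_inj : injective enc.
Proof.
move=> [m1 t1] [m2 t2]; rewrite /enc /= => E.
have Em : m1 = m2.
  apply: val_inj; rewrite /= -(size_tuple t1) -(size_tuple t2).
  by rewrite -(size_map val t1) E size_map.
subst m2; congr (existT _ _ _); apply: val_inj; exact: (inj_map val_inj E).
Qed.

Lemma enc_lt p : all (fun x => x < K.+1)%N (enc p).
Proof. by apply/allP => x /mapP [i _ ->]; apply: ltn_ord. Qed.

Definition mult (p : ST) : {ffun 'I_K.+1 -> 'I_N.+1} :=
  [ffun i => if i == ord0 then inord (N - tag p) else inord (count_mem (val i) (enc p))].

Definition sflat (j : {ffun 'I_K.+1 -> 'I_N.+1}) : seq nat :=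
  sort leq (flatten [seq nseq (j i) (val i) | i <- enum 'I_K.+1 & i != ord0]).

Definition cons (j : {ffun 'I_K.+1 -> 'I_N.+1}) : ST :=
  existT (fun m : 'I_K.+1 => m.-tuple 'I_K.+1) (inord (size (sflat j)))
     [tuple (inord (nth 0%N (sflat j) i) : 'I_K.+1) | i < inord (size (sflat j))].

Lemma mem_sflat j x : x \in sflat j -> exists2 i : 'I_K.+1, i != ord0 & x = val i.
Proof.
rewrite mem_sort => /flattenP [y /mapP [i Hi ->] /nseqP [-> _]].
move: Hi; rewrite mem_filter => /andP [ni _].
by exists i.
Qed.

Lemma all_sflat j : all (fun x => 0 < x < K.+1)%N (sflat j).
Proof.
apply/allP => x /mem_sflat [i ni ->]; rewrite ltn_ord andbT lt0n.
by apply: contra ni => /eqP E; apply/eqP/val_inj.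
Qed.

Lemma all_sflat_lt j : all (fun x => x < K.+1)%N (sflat j).
Proof. by apply/allP => x /(allP (all_sflat j)) /andP []. Qed.

Lemma all_sflat_pos j : all (fun x => 0 < x)%N (sflat j).
Proof. by apply/allP => x /(allP (all_sflat j)) /andP []. Qed.

Lemma cnt_sflat j (i : 'I_K.+1) :
  count_mem (val i) (sflat j) = if i == ord0 then 0%N else j i.
Proof.
rewrite /sflat (seq.permP (permEl (perm_sort leq _))) count_flatten -map_comp sumnE.
rewrite big_map big_filter big_enum_cond /=.
under eq_bigr do rewrite count_nseq.
case: eqP => [->|ni].
  by rewrite big1 // => i' ni' /=; rewrite (_ : (val i' == 0%N) = false) //; apply/negbTE; apply: contra ni' => /eqP E; apply/eqP/val_inj.
rewrite (bigD1 i) /=; last by apply/eqP.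
rewrite eqxx mul1n big1 ?addn0 // => i' /andP [_ ne].
rewrite (_ : (val i' == val i) = false) //; apply/negbTE; apply: contra ne => /eqP E; apply/eqP/val_inj.
by [].
Qed.


Lemma lift0_neq n (i : 'I_n) : (lift ord0 i == ord0 :> 'I_n.+1) = false.
Proof. by rewrite eq_sym; apply: negbTE (neq_lift _ _). Qed.

Lemma sz_sflat (j : {ffun 'I_K.+1 -> 'I_N.+1}) : (\sum_(i < K.+1) (j i : nat))%N = (j ord0 + size (sflat j))%N.
Proof.
rewrite (cnt_size (all_sflat_lt j)) big_ord_recl [in RHS]big_ord_recl cnt_sflat eqxx add0n.
congr (_ + _)%N; apply: eq_bigr => i _; by rewrite cnt_sflat lift0_neq.
Qed.

Lemma wsum_sflat (j : {ffun 'I_K.+1 -> 'I_N.+1}) : (\sum_(i < K.+1) i.+1 * j i)%N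
   = (j ord0 + size (sflat j) + sumn (sflat j))%N.
Proof.
under eq_bigr do rewrite mulSn.
rewrite big_split /= sz_sflat; congr (_ + _)%N.
rewrite (cnt_sumn (all_sflat_lt j)); apply: eq_bigr => i _; rewrite cnt_sflat.
by case: eqP => [->|].
Qed.

Definition Qc (j : {ffun 'I_K.+1 -> 'I_N.+1}) :=
  ((\sum_(i < K.+1) (j i : nat))%N == N) && ((\sum_(i < K.+1) i.+1 * j i)%N == K + N)%N.

Lemma Q_facts (j : {ffun 'I_K.+1 -> 'I_N.+1}) : Qc j ->
  [/\ (size (sflat j) <= N)%N, sumn (sflat j) = K & (size (sflat j) <= K)%N].
Proof.
rewrite /Qc sz_sflat wsum_sflat => /andP [/eqP E1 /eqP E2].
have E3 : sumn (sflat j) = K.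
  by move: E2; rewrite E1 addnC => /addIn.
split => //; first by rewrite -E1 leq_addl.
by rewrite -E3 size_le_sumn // all_sflat_pos.
Qed.

Lemma enc_cons (j : {ffun 'I_K.+1 -> 'I_N.+1}) : (size (sflat j) <= K)%N -> enc (cons j) = sflat j.
Proof.
move=> hs; rewrite /enc /cons /=.
set s := sflat j.
have hsz : ((inord (size s) : 'I_K.+1) : nat) = size s by rewrite inordK.
rewrite /mktuple /= -map_comp.
have -> : [seq (nat_of_ord (n:=K.+1) \o
         (fun i : 'I_(@inord K (size s)) => @inord K (nth 0%N s i))) i
    | i <- enum 'I_(@inord K (size s))] =
   [seq (nat_of_ord (@inord K (nth 0%N s x))) | x <- map val (enum 'I_(@inord K (size s)))].
  by rewrite -map_comp.
rewrite val_enum_ord hsz -[RHS](mkseq_nth 0%N s) /mkseq; apply/eq_in_map => x.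
rewrite mem_iota add0n => /andP [_ hx]; rewrite inordK //.
by apply: (allP (all_sflat_lt j)); rewrite mem_nth.
Qed.

Lemma tag_cons (j : {ffun 'I_K.+1 -> 'I_N.+1}) :
  (size (sflat j) <= K)%N -> (tag (cons j) : nat) = size (sflat j).
Proof. by move=> hs; rewrite /= inordK. Qed.

Lemma mult_cons (j : {ffun 'I_K.+1 -> 'I_N.+1}) : Qc j -> mult (cons j) = j.
Proof.
move=> Q; have [h1 h2 h3] := Q_facts Q.
move: Q; rewrite /Qc sz_sflat => /andP [/eqP E1 _].
apply/ffunP => i; rewrite ffunE enc_cons //.
case: eqP => [->|/eqP/negbTE ni].
  rewrite tag_cons //; apply: val_inj => /=.
  rewrite inordK; last by rewrite ltnS leq_subr.
  by rewrite -[X in (X - _)%N = _]E1 addnK.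
by rewrite cnt_sflat ni inord_val.
Qed.

Lemma perm_sflat_mult p : is_partition K (enc p) -> (tag p <= N)%N ->
  perm_eq (sflat (mult p)) (enc p).
Proof.
move=> /and3P [_ hpos _] hN.
rewrite /perm_eq; apply/allP => x _; apply/eqP.
case: (ltnP x K.+1) => hx.
  have := cnt_sflat (mult p) (Ordinal hx); rewrite /= => ->; rewrite ffunE.
  case: eqP => [E | ne].
    have x0 : x = 0%N by have := congr1 val E.
    subst x; symmetry; apply/count_memPn; apply/negP => /(allP hpos).
    by [].
  rewrite inordK // ltnS (leq_trans (count_size _ _)) // size_enc //.
have -> : count_mem x (sflat (mult p)) = 0%N.
  apply/count_memPn; apply/negP => /(allP (all_sflat_lt _)).
  by rewrite ltnNge hx.
symmetry; apply/count_memPn; apply/negP => /(allP (enc_lt p)).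
by rewrite ltnNge hx.
Qed.

Lemma cons_mult p : is_partition K (enc p) -> (tag p <= N)%N -> cons (mult p) = p.
Proof.
move=> hp hN; have P := perm_sflat_mult hp hN.
have hs : (size (sflat (mult p)) <= K)%N.
  by rewrite (perm_size P) size_enc -ltnS ltn_ord.
apply: enc_inj; rewrite enc_cons //.
move: (hp) => /and3P [hsort _ _].
apply: (sorted_eq leq_trans anti_leq) => //.
exact: (sort_sorted leq_total).
Qed.

Lemma Q_mult p : is_partition K (enc p) -> (tag p <= N)%N -> Qc (mult p).
Proof.
move=> hp hN; have P := perm_sflat_mult hp hN.
move: (hp) => /and3P [_ _ /eqP hsum].
rewrite /Qc sz_sflat wsum_sflat (perm_size P) (perm_sumn P) hsum size_enc ffunE eqxx.
rewrite inordK; last by rewrite ltnS leq_subr.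
by rewrite subnK // eqxx addnC eqxx.
Qed.

Lemma cond_equiv p : (Qc (mult p) && (cons (mult p) == p))
   = (is_partition K (enc p) && (tag p <= N)%N).
Proof.
apply/andP/andP => [[Q /eqP E] | [hp hN]]; last first.
  by split; [apply: Q_mult | apply/eqP; apply: cons_mult].
have [h1 h2 h3] := Q_facts Q.
have Ee : enc p = sflat (mult p) by rewrite -{1}E enc_cons.
rewrite -size_enc Ee; split => //.
rewrite /is_partition h2 eqxx andbT all_sflat_pos andbT.
exact: (sort_sorted leq_total).
Qed.

Lemma weight_eq (a : nat -> Cplx) p : is_partition K (enc p) -> (tag p <= N)%N ->
  (N`!)%:R / (\prod_(i < K.+1) (mult p i)`!)%N%:R
     * \prod_(i < K.+1) (fun j => if j == 0%N then 1 else a j) i ^+ mult p i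
  = ((Cstb (enc p))%:R)^-1 * ((N ^_ (tag p))%:R * \prod_(i < tag p) a (val (tnth (tagged p) i))).
Proof.
move=> hp hN; move: (hp) => /and3P [_ hpos _].
set a0 := fun j => if j == 0%N then 1 else a j.
have c0 : count_mem 0%N (enc p) = 0%N.
  by apply/count_memPn; apply/negP => /(allP hpos).
have hcnt (i : 'I_K) : (mult p (lift ord0 i) : nat) = count_mem (lift ord0 i : nat) (enc p).
  rewrite ffunE lift0_neq inordK // ltnS (leq_trans (count_size _ _)) // size_enc //.
have h0 : (mult p ord0 : nat) = (N - tag p)%N.
  by rewrite ffunE eqxx inordK // ltnS leq_subr.
have F1 : (\prod_(i < K.+1) (mult p i)`!)%N = ((N - tag p)`! * Cstb (enc p))%N.
  rewrite (Cstb_cnt (enc_lt p)) big_ord_recl [in RHS]big_ord_recl h0 /= c0 /= mul1n.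
  by congr (_ * _)%N; apply: eq_bigr => i _; rewrite hcnt.
have F2 : \prod_(i < K.+1) a0 i ^+ mult p i = \prod_(x <- enc p) a x.
  transitivity (\prod_(x <- enc p) a0 x); last first.
    rewrite big_seq [RHS]big_seq; apply: eq_bigr => x /(allP hpos).
    by rewrite /a0; case: x.
  rewrite (prod_cnt a0 (enc_lt p)) big_ord_recl [in RHS]big_ord_recl.
  rewrite /a0 /= !expr1n; congr (_ * _); apply: eq_bigr => i _; by rewrite hcnt.
have F3 : \prod_(i < tag p) a (val (tnth (tagged p) i)) = \prod_(x <- enc p) a x.
  by rewrite /enc big_map big_tuple.
rewrite F1 F2 F3 -(ffact_fact hN) !natrM.
have nz1 : ((N - tag p)`!)%:R != 0 :> Cplx by rewrite pnatr_eq0 -lt0n fact_gt0.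
have nz2 : (Cstb (enc p))%:R != 0 :> Cplx.
  by rewrite pnatr_eq0 -lt0n /Cstb prodn_gt0 // => i; rewrite fact_gt0.
by rewrite invfM mulrA mulfK // -mulrA mulrCA.
Qed.
End Comb.

Theorem mainTheorem3 (k N : nat) (a : nat -> Cplx) :
  let a0 : nat -> Cplx := fun j => if j == 0%N then 1 else a j in
  let anj : nat -> nat -> Cplx := fun n j => if (n <= N)%N then a j else 0 in
  obell (k + N) N a0 =
  \sum_(m < k.+1) \sum_(t : m.-tuple 'I_k.+1 | is_partition k (map val t))
     ((Cstb (map val t))%:R)^-1 *
     \sum_(s : 'S_m) (-1) ^+ odd_perm s *
        AsigL s (fun i => val (tnth t i)) anj N.
Proof.
move=> a0 anj.
have RS : forall m (t : m.-tuple 'I_k.+1),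
   \sum_(s : 'S_m) (-1) ^+ odd_perm s * AsigL s (fun i => val (tnth t i)) anj N
   = (N ^_ m)%:R * \prod_(i < m) a (val (tnth t i)).
  move=> m t; rewrite -sign_sum mulr_suml; apply: eq_bigr => s _.
  by rewrite /anj AsigL_simpl mulrA.
symmetry.
under eq_bigr do under eq_bigr do rewrite RS.
rewrite (sig_big_dep (J := fun m : 'I_k.+1 => m.-tuple 'I_k.+1) xpredT
   (fun m (t : m.-tuple 'I_k.+1) => is_partition k (map val t))
   (fun m (t : m.-tuple 'I_k.+1) => ((Cstb (map val t))%:R)^-1 *
       ((N ^_ m)%:R * \prod_(i < m) a (val (tnth t i))))) /=.
rewrite (bigID (fun p : ST k => tag p <= N)%N) /= [X in _ + X]big1 ?addr0; last first.
  by move=> p /andP [_ hn]; rewrite ffact_small ?mul0r ?mulr0 // ltnNge.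
rewrite /obell.
have E : (k + N - N + 1 = k.+1)%N by rewrite addnK addn1.
move: (k + N - N + 1)%N E => q E; subst q.
rewrite (reindex_onto (@mult k N) (@cons k N)) /=; last by move=> j hj; apply: mult_cons.
apply: eq_big => [p | p /andP [hp hN]].
  by rewrite -cond_equiv.
symmetry; exact: weight_eq.
Qed.
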